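(* Let $(A,\wedge,\vee,0,1)$ be a bounded distributive lattice and $\to$ a binary operation on $A$. Then $(A,\wedge,\vee,\to,0,1)$ is a weak Heyting algebra if and only if $(A,\wedge,\vee,\wedge,\to,1)$ (with the meet also used as the monoidal operation) is a $\mathsf{DLCMI}$. Consequently the variety of weak Heyting algebras can be identified with the subvariety of $\mathsf{DLCMI}$ defined by the equation $x\wedge y\approx x\cdot y$.
   Context: A weak Heyting algebra is an algebra $(A,\wedge,\vee,\to,0,1)$ such that $(A,\wedge,\vee,0,1)$ is a bounded distributive lattice and for all $a,b,c$: $(a\to b)\wedge(a\to c)=a\to(b\wedge c)$; $(a\to c)\wedge(b\to c)=(a\vee b)\to c$; $(a\to b)\wedge(b\to c)\le a\to c$; $a\to a=1$. An algebra $(A,\wedge,\vee,\cdot,\to,1)$ of type $(2,2,2,2,0)$ is a $\mathsf{DLCMI}$ if for all $a,b,c\in A$: (1) $(A,\wedge,\vee)$ is a distributive lattice; (2) $1$ is its largest element; (3) $(A,\cdot,1)$ is a commutative monoid; (4) $(a\to b)\wedge(a\to c)=a\to(b\wedge c)$; (5) $(a\to c)\wedge(b\to c)=(a\vee b)\to c$; (6) $a\to a=1$; (7) $(a\vee b)\cdot c=(a\cdot c)\vee(b\cdot c)$; (8) $(a\to b)\cdot(b\to c)\le a\to c$; (9) $a\to b\le (a\cdot c)\to(b\cdot c)$. *)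

(* Defs.v *)
From mathcomp Require Import all_boot all_order.
Set Implicit Arguments. Unset Strict Implicit. Unset Printing Implicit Defensive.
Import Order.TTheory.
Local Open Scope order_scope.

Definition weak_heyting_axioms {d} (A : tbDistrLatticeType d) (imp : A -> A -> A) : Prop :=
  [/\ (forall a b c : A, imp a b `&` imp a c = imp a (b `&` c)),
      (forall a b c : A, imp a c `&` imp b c = imp (a `|` b) c),
      (forall a b c : A, imp a b `&` imp b c <= imp a c)
    & (forall a : A, imp a a = \top)].

Definition DLCMI (A : Type) (meet join mul imp : A -> A -> A) (one : A) : Prop :=
  let le x y := meet x y = x in
  (* (1) (A, meet, join) is a distributive lattice *)
      ((forall x y z, meet x (meet y z) = meet (meet x y) z) /\
          (forall x y z, join x (join y z) = join (join x y) z) /\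
          (forall x y, meet x y = meet y x) /\
          (forall x y, join x y = join y x) /\
          (forall x y, meet x (join x y) = x) /\
          (forall x y, join x (meet x y) = x)
        /\ (forall x y z, meet x (join y z) = join (meet x y) (meet x z))) /\
      (* (2) one is the largest element *)
      (forall x, le x one) /\
      (* (3) (A, mul, one) is a commutative monoid *)
      ((forall x y z, mul x (mul y z) = mul (mul x y) z) /\
          (forall x y, mul x y = mul y x)
        /\ (forall x, mul one x = x)) /\
      (* (4) *) (forall a b c, meet (imp a b) (imp a c) = imp a (meet b c)) /\
      (* (5) *) (forall a b c, meet (imp a c) (imp b c) = imp (join a b) c) /\
      (* (6) *) (forall a, imp a a = one) /\
      (* (7) *) (forall a b c, mul (join a b) c = join (mul a c) (mul b c)) /\
      (* (8) *) (forall a b c, le (mul (imp a b) (imp b c)) (imp a c))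
    /\ (* (9) *) (forall a b c, le (imp a b) (imp (mul a c) (mul b c))).

(* Main.v *)
Require Import Defs.
From mathcomp Require Import all_boot all_order.
Import Order.TTheory.
Local Open Scope order_scope.

Theorem lemma2p5 {d : Order.disp_t} (A : tbDistrLatticeType d) (imp : A -> A -> A) :
  weak_heyting_axioms imp <->
  DLCMI (@Order.meet d A) (@Order.join d A) (@Order.meet d A) imp (\top : A).
Proof.
split.
- case=> H1 H2 H3 H4.
  have mono : forall x y c, x <= y -> imp y c <= imp x c.
    move=> x y c xy; apply/meet_idPl.
    by rewrite meetC H2; move/join_idPr: xy => ->.
  split; first by do 6?split; [exact: meetA|exact: joinA|exact: meetC|exact: joinC
      |move=> x y; exact: joinKI|move=> x y; exact: meetKU|exact: meetUr].
  split; first by move=> x; apply/meet_idPl; exact: lex1.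
  split; first by do 2?split; [exact: meetA|exact: meetC|move=> x; exact: meet1x].
  do 3 (split; first by []).
  split; first by move=> a b c; exact: meetUl.
  split; first by move=> a b c; apply/meet_idPl; exact: H3.
  move=> a b c; apply/meet_idPl.
  rewrite -H1.
  have -> : imp (a `&` c) c = \top.
    apply/eqP; rewrite eq_le lex1 /= -(H4 c); apply: mono; exact: leIr.
  by rewrite meetx1; apply: mono; exact: leIl.
- case=> _ [_ [_ [H4 [H5 [H6 [_ [H8 _]]]]]]].
  split => //; move=> a b c; apply/meet_idPl; exact: H8.
Qed.
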